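(* Let $D_\infty=\mathbb{Z}/2\ast\mathbb{Z}/2$ be the infinite dihedral group. There is no finite generating set $S$ of $D_\infty$ (with $S=S^{-1}$, $e\notin S$) with respect to which $\kappa(g)=0$ for all $g\in D_\infty\smallsetminus\{e\}$.
   Context: For a group $G$ with finite generating set $S$ ($S=S^{-1}$, $e\notin S$), $|x|$ denotes the word length of $x\in G$ with respect to $S$. For $g\in G$ define $\mathrm{Av}(g)=\frac{1}{|S|}\sum_{a\in S}|a^{-1}ga|$, and for $g\neq e$ define the curvature $\kappa(g)=\frac{|g|-\mathrm{Av}(g)}{|g|}$. *)

(* Defs.v *)
From Stdlib Require Import ClassicalEpsilon.
From mathcomp Require Import all_boot all_order all_algebra.
Set Implicit Arguments. Unset Strict Implicit. Unset Printing Implicit Defensive.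
Import Order.TTheory GRing.Theory Num.Theory.
Local Open Scope ring_scope.

(* Concrete model of the infinite dihedral group D_oo = Z/2 * Z/2 ~ Z x| Z/2:
   the pair (k, b) stands for t^k r^b, where t is a translation of infinite
   order and r a reflection with r t r = t^-1. *)
Definition Dinf : Type := (int * bool)%type.

Definition dmul (x y : Dinf) : Dinf :=
  ((x.1 + (if x.2 then - y.1 else y.1))%R, addb x.2 y.2).

Definition dinv (x : Dinf) : Dinf :=
  if x.2 then x else ((- x.1)%R, false).

Definition de : Dinf := (0%R, false).

Fixpoint ball (S : seq Dinf) (n : nat) : seq Dinf :=
  match n with
  | 0 => [:: de]
  | n'.+1 => ball S n' ++ [seq dmul y s | y <- ball S n', s <- S]
  end.

(* S generates D_oo (as S = S^-1, monoid generation = group generation) *)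
Definition generates (S : seq Dinf) : Prop := forall x, exists n, x \in ball S n.

(* word length |x| w.r.t. S (0 if x is not reachable, irrelevant when S generates) *)
Definition wordlen (S : seq Dinf) (x : Dinf) : nat :=
  match excluded_middle_informative (exists n, x \in ball S n) with
  | left H => ex_minn H
  | right _ => 0%N
  end.

Definition Av (S : seq Dinf) (g : Dinf) : rat :=
  (\sum_(a <- S) ((wordlen S (dmul (dinv a) (dmul g a)))%:R : rat)) / (size S)%:R.

Definition kappa (S : seq Dinf) (g : Dinf) : rat :=
  (((wordlen S g)%:R : rat) - Av S g) / (wordlen S g)%:R.

(* Main.v *)
Require Import Defs.
From mathcomp Require Import all_boot all_order all_algebra.
From mathcomp Require Import zify ring.
From Stdlib Require Import ClassicalEpsilon.
Set Implicit Arguments. Unset Strict Implicit. Unset Printing Implicit Defensive.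
Import Order.TTheory GRing.Theory Num.Theory.
Local Open Scope ring_scope.

Definition conj (x g : Dinf) : Dinf := dmul (dinv x) (dmul g x).

Lemma conj_mul (y s g : Dinf) : conj (dmul y s) g = conj s (conj y g).
Proof.
case: y => a b; case: s => c d; case: g => k e.
rewrite /conj /dmul /dinv.
case: b; case: d; case: e => /=; congr pair; ring.
Qed.

Lemma conj_refl (x : Dinf) k : (conj x (k, true)).2 = true.
Proof. by case: x => a [] //=. Qed.

Lemma dmul_de s : dmul de s = s.
Proof. by case: s => a b; rewrite /dmul /de /= add0r. Qed.

Lemma ball1 S x : (x \in ball S 1) = (x == de) || (x \in S).
Proof.
change (ball S 1) with ([:: de] ++ [seq dmul y s | y <- [:: de], s <- S]).
rewrite mem_cat inE; congr orb.
apply/allpairsP/idP => [[[y s] [/= + Hs ->]]|Hx].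
  by rewrite inE => /eqP ->; rewrite dmul_de.
by exists (de, x); rewrite /= inE eqxx dmul_de.
Qed.

Lemma wordlen_S S g : de \notin S -> g \in S -> wordlen S g = 1%N.
Proof.
move=> HdS Hg; rewrite /wordlen.
case: excluded_middle_informative => [H|[]]; last by exists 1%N; rewrite ball1 Hg orbT.
case: (ex_minnP H) => m Hm Hmin.
have : (m <= 1)%N by apply: Hmin; rewrite ball1 Hg orbT.
case: m Hm {Hmin} => [|[|//]] //.
rewrite /= inE => /eqP Hgd; move: HdS; by rewrite -Hgd Hg.
Qed.

Lemma wordlen_pos S x : generates S -> x != de -> (1 <= wordlen S x)%N.
Proof.
move=> Hgen Hx; rewrite /wordlen.
case: excluded_middle_informative => [H|[]]; last exact: Hgen.
case: (ex_minnP H) => m Hm _.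
by case: m Hm => //=; rewrite inE (negbTE Hx).
Qed.

Lemma wordlen_1 S x : generates S -> wordlen S x = 1%N -> x \in S \/ x = de.
Proof.
move=> Hgen; rewrite /wordlen.
case: excluded_middle_informative => [H|[]]; last exact: Hgen.
case: (ex_minnP H) => m Hm _ Hm1; subst m.
by move: Hm; rewrite ball1 => /orP [/eqP ->|]; [right|left].
Qed.

Lemma closure S g a : de \notin S -> generates S ->
  (forall g : Dinf, g != de -> kappa S g = 0) ->
  g \in S -> (forall a, a \in S -> conj a g != de) -> a \in S -> conj a g \in S.
Proof.
move=> HdS Hgen Hk Hg Hne Ha.
have gne : g != de by apply: contraNneq HdS => <-.
have := Hk g gne; rewrite /kappa (wordlen_S HdS Hg) divr1 /Av.
set w := fun a => wordlen S (dmul (dinv a) (dmul g a)).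
have Hsz : (size S)%:R != 0 :> rat.
  by rewrite pnatr_eq0 -lt0n; case: (S) Hg.
move/eqP; rewrite subr_eq0 => /eqP /esym /(congr1 (fun x => x * (size S)%:R)).
rewrite mulfVK // mul1r -natr_sum => /eqP; rewrite eqr_nat => /eqP Hsum.
have Hsum2 : (\sum_(a <- S) (w a - 1) = 0)%N.
  have : (\sum_(a <- S) w a = \sum_(a <- S) (1 + (w a - 1)))%N.
    apply: eq_big_seq => b Hb; rewrite /w.
    have := wordlen_pos Hgen (Hne b Hb); rewrite /conj => h; by rewrite addnC subnK.
  by move=> E; move: E; rewrite (big_split addn) /= sum1_size Hsum => E; apply/eqP; rewrite -(eqn_add2l (size S)) addn0 -E.
move/eqP: Hsum2; rewrite sum_nat_seq_eq0 => /allP /(_ a Ha) /=.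
have := wordlen_pos Hgen (Hne a Ha); rewrite /w /conj => H1 H2.
have Hw1 : wordlen S (conj a g) = 1%N by rewrite /conj; lia.
case: (wordlen_1 Hgen Hw1) => // E.
by move: (Hne a Ha); rewrite E eqxx.
Qed.

Lemma conj_de g : conj de g = g.
Proof. by case: g => a []; rewrite /conj /dmul /de /dinv /=; congr pair; ring. Qed.

Theorem mainTheorem5 :
  ~ (exists S : seq Dinf,
       [/\ uniq S,
           (forall s, s \in S -> dinv s \in S),
           de \notin S,
           generates S
         & forall g : Dinf, g != de -> kappa S g = 0]).
Proof.
move=> [S [Hu Hinv HdS Hgen Hk]].
have [k Hk0] : exists k, (k, true) \in S.
  case: (boolP (has (fun s : Dinf => s.2) S)) => [/hasP [[k b] Hs /= Hb]|Hn].
    by exists k; rewrite -Hb.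
  have Hall : forall n x, x \in ball S n -> x.2 = false.
    elim=> [|n IH] x /=; first by rewrite inE => /eqP ->.
    rewrite mem_cat => /orP [/IH //|/allpairsP [[y s] [/= Hy Hs ->]]].
    rewrite /dmul /= (IH _ Hy) /=.
    by apply/negbTE; apply: contra Hn => Hs2; apply/hasP; exists s.
  by have [n /Hall] := Hgen (0, true).
have Hreach : forall n x k, x \in ball S n -> (k, true) \in S ->
    conj x (k, true) \in S.
  elim=> [|n IH] x k' /=; first by rewrite inE => /eqP -> ?; rewrite conj_de.
  rewrite mem_cat => /orP [Hx|/allpairsP [[y s] [/= Hy Hs ->]]] Hk'.
    exact: IH.
  rewrite conj_mul.
  have := IH _ _ Hy Hk'; have := conj_refl y k'.
  case: (conj y (k', true)) => k'' b /= -> Hin.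
  apply: (closure HdS Hgen Hk Hin) => // a _.
  by apply/eqP => /(congr1 snd); rewrite conj_refl.
pose h (n : nat) := conj (n%:Z, false) (k, true).
have hS : forall n, h n \in S.
  move=> n; have [m Hm] := Hgen (n%:Z, false); exact: Hreach Hm Hk0.
have hinj : injective h.
  move=> n m; rewrite /h /conj /dmul /dinv /= => [[]]; lia.
have Hun : uniq (map h (iota 0 (size S).+1)).
  rewrite map_inj_uniq //; exact: iota_uniq.
have Hsub : {subset map h (iota 0 (size S).+1) <= S}.
  move=> x /mapP [n _ ->]; exact: hS.
have := uniq_leq_size Hun Hsub.
rewrite size_map size_iota ltnn.
done.
Qed.
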